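(* Let $X$ be a real Banach space such that for every $\varepsilon>0$, every finite dimensional subspace $Z$ of $X$ and every $n\in\mathbb N$ there exists a linear operator $T:\ell_\infty^n\to X$ with $\|T\|\le1$ such that $\|z+T(y)\|\ge(1-\varepsilon)(\|z\|+\|y\|)$ for every $y\in\ell_\infty^n$ and every $z\in Z$. Then for every non-zero real Banach space $Y$ and every closed subspace $H$ of $L(Y,X)$ containing $F(Y,X)$, the norm of $H$ (the operator norm) is octahedral.
   Context: $L(Y,X)$ is the space of bounded linear operators from $Y$ to $X$ with the operator norm and $F(Y,X)$ is its subspace of finite-rank operators. A Banach space $W$ is octahedral if for every finite dimensional subspace $E$ of $W$ and every $\varepsilon>0$ there exists $y\in W$, $\|y\|=1$, with $\|x+\lambda y\|\ge(1-\varepsilon)(\|x\|+|\lambda|)$ for all $x\in E$, $\lambda\in\mathbb R$. *)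

(* Defs.v *)
From HB Require Import structures.
From mathcomp Require Import all_boot all_order all_algebra.
From mathcomp Require Import all_classical all_reals all_analysis.
Set Implicit Arguments. Unset Strict Implicit. Unset Printing Implicit Defensive.
Import Order.TTheory GRing.Theory Num.Theory.
Import numFieldNormedType.Exports.
Local Open Scope classical_set_scope.
Local Open Scope ring_scope.

Section Defs.
Variable R : realType.

Definition in_span (V : lmodType R) (s : seq V) (z : V) : Prop :=
  exists c : 'I_(size s) -> R, z = \sum_(i < size s) c i *: s`_i.

Definition is_linear (U V : lmodType R) (f : U -> V) : Prop :=
  forall (a : R) (x y : U), f (a *: x + y) = a *: f x + f y.

Definition bounded_op (U V : normedModType R) (f : U -> V) : Prop :=
  is_linear f /\ exists M : R, forall x : U, `|f x| <= M * `|x|.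

Definition opnorm (U V : normedModType R) (f : U -> V) : R :=
  sup [set `|f x| | x in [set x : U | `|x| <= 1]].

Definition finite_rank_op (U V : normedModType R) (f : U -> V) : Prop :=
  bounded_op f /\ exists s : seq V, forall x, in_span s (f x).

Definition closed_op_subspace (U V : normedModType R) (H : set (U -> V)) : Prop :=
  [/\ (forall f, H f -> bounded_op f),
      H (fun _ => 0),
      (forall f g, H f -> H g -> H (fun x => f x + g x)),
      (forall (a : R) f, H f -> H (fun x => a *: f x)) &
      (forall f, bounded_op f ->
         (forall e : R, 0 < e -> exists g, H g /\ opnorm (fun x => f x - g x) < e) ->
         H f)].

Definition in_op_span (U V : normedModType R) (s : seq (U -> V)) (f : U -> V) : Prop :=
  exists c : 'I_(size s) -> R, f = (fun x => \sum_(i < size s) c i *: (s`_i) x).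

Definition octahedral_op_subspace (U V : normedModType R) (H : set (U -> V)) : Prop :=
  forall (s : seq (U -> V)), (forall f, f \in s -> H f) ->
  forall eps : R, 0 < eps ->
  exists S : U -> V, [/\ H S, opnorm S = 1 &
    forall T, in_op_span s T -> forall lam : R,
      opnorm (fun x => T x + lam *: S x) >= (1 - eps) * (opnorm T + `|lam|)].

End Defs.

(* Main.v *)
Require Import Defs.
From HB Require Import structures.
From mathcomp Require Import all_boot all_order all_algebra.
From mathcomp Require Import all_classical all_reals all_analysis.
Import Order.TTheory GRing.Theory Num.Theory.
Import numFieldNormedType.Exports.
Local Open Scope classical_set_scope.
Local Open Scope ring_scope.
From mathcomp Require Import finmap ring lra.
Set Implicit Arguments. Unset Strict Implicit.
Section Op.
Variable R : realType.

Section Lin.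
Variables (U V : lmodType R) (f : U -> V).
Hypothesis lf : is_linear f.
Lemma lin0 : f 0 = 0.
Proof. have h := lf 1 0 0; rewrite !scale1r addr0 in h.
by have := congr1 (fun v => v - f 0) h; rewrite subrr addrK. Qed.
Lemma linD x y : f (x + y) = f x + f y.
Proof. by have := lf 1 x y; rewrite !scale1r. Qed.
Lemma linZ a x : f (a *: x) = a *: f x.
Proof. by have := lf a x 0; rewrite !addr0 lin0 addr0. Qed.
Lemma linN x : f (- x) = - f x.
Proof. by rewrite -scaleN1r linZ scaleN1r. Qed.
Lemma linB x y : f (x - y) = f x - f y.
Proof. by rewrite linD linN. Qed.
End Lin.

Section Opn.
Variables (U V : normedModType R).

Lemma opnorm_le (f : U -> V) M : 0 <= M -> (forall x, `|f x| <= M * `|x|) -> opnorm f <= M.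
Proof.
move=> M0 hf; apply: ge_sup; first by exists `|f 0|; exists 0 => //; rewrite /= normr0.
move=> _ [x hx <-]; apply: le_trans (hf x) _.
by rewrite -[leRHS]mulr1 ler_wpM2l.
Qed.

Lemma opnorm_has_sup (f : U -> V) : bounded_op f ->
  has_sup [set `|f x| | x in [set x : U | `|x| <= 1]].
Proof.
move=> [_ [M hM]]; split; first by exists `|f 0|; exists 0 => //; rewrite /= normr0.
exists (`|M|) => _ [x hx <-]; apply: le_trans (hM x) _.
apply: le_trans (ler_norm _) _; rewrite normrM.
by rewrite -[leRHS]mulr1 ler_wpM2l // normr_id.
Qed.

Lemma opnorm_ge (f : U -> V) x : bounded_op f -> `|x| <= 1 -> `|f x| <= opnorm f.
Proof. by move=> bf hx; apply: sup_upper_bound; [exact: opnorm_has_sup|exists x]. Qed.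

Lemma opnorm_ge0 (f : U -> V) : bounded_op f -> 0 <= opnorm f.
Proof. move=> bf; have := @opnorm_ge f 0 bf; rewrite normr0 ler01 => /(_ isT); exact: le_trans. Qed.

Lemma opnorm_bound (f : U -> V) x : bounded_op f -> `|f x| <= opnorm f * `|x|.
Proof.
move=> bf; have [->|x0] := eqVneq x 0.
  by rewrite (lin0 bf.1) !normr0 mulr0.
have nx : 0 < `|x| by rewrite normr_gt0.
have := @opnorm_ge f (`|x|^-1 *: x) bf.
rewrite normrZ normfV normr_id mulVf ?gt_eqF // lexx => /(_ isT).
rewrite (linZ bf.1) normrZ normfV normr_id ler_pdivrMl //.
by rewrite mulrC.
Qed.

Lemma opnorm_adh (f : U -> V) e : bounded_op f -> 0 < e ->
  exists2 x, `|x| <= 1 & opnorm f - e < `|f x|.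
Proof.
move=> bf e0; have [_ [x hx <-] h] := sup_adherent e0 (opnorm_has_sup bf).
by exists x.
Qed.

End Opn.
End Op.

Set Implicit Arguments. Unset Strict Implicit.
Section HB.
Variables (R : realType) (Y : normedModType R) (y0 : Y).

Definition good (G : set (Y * R)) :=
  [/\ (forall x a b, G (x, a) -> G (x, b) -> a = b),
      (forall r x a x' a', G (x, a) -> G (x', a') -> G (r *: x + x', r * a + a')),
      (forall x a, G (x, a) -> a <= `|x|) & G (y0, `|y0|)].

Lemma good00 G : good G -> G (0, 0).
Proof.
move=> [_ cl _ g0]; have := cl (-1) _ _ _ _ g0 g0.
by rewrite scaleN1r mulN1r !addNr.
Qed.

Lemma goodZ G r x a : good G -> G (x, a) -> G (r *: x, r * a).
Proof.
move=> gG h; have [_ cl _ _] := gG.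
by have := cl r _ _ _ _ h (good00 gG); rewrite !addr0.
Qed.

Lemma goodD G x a x' a' : good G -> G (x, a) -> G (x', a') -> G (x + x', a + a').
Proof.
move=> [_ cl _ _] h h'; by have := cl 1 _ _ _ _ h h'; rewrite scale1r mul1r.
Qed.

Lemma good_abs G x a : good G -> G (x, a) -> `|a| <= `|x|.
Proof.
move=> gG h; have [_ _ dom _] := gG.
rewrite ler_norml dom // andbT.
have := dom _ _ (goodZ (-1) gG h); rewrite scaleN1r mulN1r normrN.
by rewrite lerNl.
Qed.

Definition PP (G : set (Y * R)) := G = set0 \/ good G.

Lemma chain_ok (F : set (set (Y * R))) : F `<=` PP -> total_on F subset -> PP (\bigcup_(X in F) X).
Proof.
move=> FP tot.
have [[G0 FG0 [p0 G0p]]|none] := pselect (exists2 G, F G & exists p, G p); last first.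
  left; apply/seteqP; split=> // p [G FG Gp]; apply: none; exists G => //; by exists p.
have good_of G q : F G -> G q -> good G.
  by move=> FG Gq; case: (FP _ FG) => // G0e; rewrite G0e in Gq.
have g0 : good G0 by exact: good_of _ _ FG0 G0p.
have two p q : (\bigcup_(X in F) X) p -> (\bigcup_(X in F) X) q ->
    exists G, [/\ F G, good G, G p & G q].
  move=> [G1 FG1 G1p] [G2 FG2 G2q]; case: (tot _ _ FG1 FG2) => sub.
    by exists G2; split => //; [exact: good_of FG2 G2q|exact: sub].
  by exists G1; split => //; [exact: good_of FG1 G1p|exact: sub].
right; split.
- move=> x a b ha hb; have [G [FG gG Ga Gb]] := two _ _ ha hb.
  by have [fn _ _ _] := gG; exact: fn Ga Gb.
- move=> r x a x' a' ha hb; have [G [FG gG Ga Gb]] := two _ _ ha hb.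
  by exists G => //; have [_ cl _ _] := gG; exact: cl.
- move=> x a [G FG Ga]; have gG := good_of _ _ FG Ga.
  by have [_ _ dom _] := gG; exact: dom.
- by exists G0 => //; case: g0.
Qed.

Lemma line_good : good [set p | exists r : R, p = (r *: y0, r * `|y0|)].
Proof.
split.
- move=> x a b [r [-> ->]] [r' [e ->]].
  have [->|y00] := eqVneq y0 0; first by rewrite normr0 !mulr0.
  move/eqP: e; rewrite -subr_eq0 -scalerBl scaler_eq0 (negbTE y00) orbF subr_eq0.
  by move/eqP ->.
- move=> r x a x' a' [s [-> ->]] [s' [-> ->]].
  by exists (r * s + s'); rewrite scalerDl scalerA mulrDl mulrA.
- move=> x a [r [-> ->]]; rewrite normrZ.
  by apply: ler_wpM2r => //; exact: ler_norm.
- by exists 1; rewrite scale1r mul1r.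
Qed.

Theorem hahn_banach : exists phi : Y -> R,
  [/\ (forall a x y, phi (a *: x + y) = a * phi x + phi y),
      (forall x, `|phi x| <= `|x|) & phi y0 = `|y0|].
Proof.
have [A [PA Amax]] := Zorn_bigcup chain_ok.
have gA : good A.
  case: PA => // A0; exfalso; apply: (Amax _ _ (or_intror line_good)).
  rewrite A0; split => // /(_ (y0, `|y0|)) h.
  by have := h (ex_intro _ 1 _); rewrite scale1r mul1r => /(_ erefl).
have [fnA clA domA y0A] := gA.
have key u b v c z : A (u, b) -> A (v, c) -> b - `|u - z| <= `|v + z| - c.
  move=> hu hv; have := domA _ _ (goodD gA hu hv).
  rewrite lerBrDl addrA lerBlDr => h.
  rewrite addrC; apply: (le_trans h); rewrite [leRHS]addrC.
  have -> : u + v = (u - z) + (v + z) by rewrite addrCA subrK addrC.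
  exact: ler_normD.
have total x : exists a, A (x, a).
  apply: contrapT => nz.
  pose E := [set p.2 - `|p.1 - x| | p in A].
  have hE : has_sup E.
    split; first by exists (0 - `|0 - x|), (0, 0) => //; exact: good00.
    exists (`|0 + x| - 0) => _ [[u b] hu <-]; exact: key hu (good00 gA).
  pose t := sup E.
  have tub u b : A (u, b) -> b - `|u - x| <= t.
    by move=> hu; apply: sup_upper_bound => //; exists (u, b).
  have tlb v c : A (v, c) -> t <= `|v + x| - c.
    move=> hv; apply: ge_sup; first by case: hE.
    by move=> _ [[u b] hu <-]; exact: key hu hv.
  pose B := [set p | exists u b r, A (u, b) /\ p = (u + r *: x, b + r * t)].
  have notin u b : A (u, b) -> forall r, u + r *: x = 0 -> r = 0.
    move=> hu r e; apply: contrapT => /eqP r0; apply: nz.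
    exists (- r^-1 * b); have := goodZ (- r^-1) gA hu.
    suff -> : - r^-1 *: u = x by [].
    have -> : u = - (r *: x) by apply/eqP; rewrite -subr_eq0 opprK e.
    by rewrite scalerN scaleNr opprK scalerA mulVf // scale1r.
  apply: (Amax B); last first.
    right; split.
    - move=> _ a1 a2 [u [b [r [hu [-> ->]]]]] [u' [b' [r' [hu' [e ->]]]]].
      have e1 : (u - u') + (r - r') *: x = 0.
        by rewrite scalerBl addrACA e -opprD subrr.
      have rr : r = r'.
        apply/eqP; rewrite -subr_eq0; apply/eqP.
        apply: (notin _ _ (goodD gA hu (goodZ (-1) gA hu'))).
        by rewrite scaleN1r.
      move: e1; rewrite rr subrr scale0r addr0 => /eqP; rewrite subr_eq0 => /eqP uu.
      by rewrite uu in hu; rewrite (fnA _ _ _ hu hu').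
    - move=> s _ _ _ _ [u [b [r [hu [-> ->]]]]] [u' [b' [r' [hu' [-> ->]]]]].
      exists (s *: u + u'), (s * b + b'), (s * r + r'); split; first exact: clA.
      congr (_, _).
        by rewrite scalerDr !scalerA scalerDl addrACA.
      by rewrite mulrDr mulrDl !mulrA addrACA.
    - move=> _ _ [u [b [r [hu [-> ->]]]]].
      have [r0|r0|<-] := ltgtP 0 r; last first.
      + by rewrite scale0r mul0r !addr0; exact: domA.
      +
        pose s := - r; have s0 : 0 < s by rewrite /s oppr_gt0.
        have := tub _ _ (goodZ s^-1 gA hu).
        have -> : s^-1 *: u - x = s^-1 *: (u + r *: x).
          by rewrite scalerDr scalerA /s invrN mulNr mulVf ?ltr0_neq0 // scaleN1r.
        rewrite normrZ gtr0_norm ?invr_gt0 // -mulrBr -ler_pdivlMl ?invr_gt0 //.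
        rewrite invrK /s mulNr lerBlDr.
        by move=> h; rewrite -lerBrDr addrC.
      + have := tlb _ _ (goodZ r^-1 gA hu).
        have -> : r^-1 *: u + x = r^-1 *: (u + r *: x).
          by rewrite scalerDr scalerA mulVf ?gt_eqF // scale1r.
        rewrite normrZ gtr0_norm ?invr_gt0 // -mulrBr -ler_pdivrMl ?invr_gt0 //.
        by rewrite invrK lerBrDl addrC.
    - by exists y0, `|y0|, 0; rewrite scale0r mul0r !addr0.
  split.
    by move=> [u b] hu; exists u, b, 0; rewrite scale0r mul0r !addr0.
  move=> /(_ (x, t)) h; apply: nz; exists t; apply: h.
  by exists 0, 0, 1; split; [exact: good00|rewrite add0r scale1r add0r mul1r].
pose phi x := xget 0 [set a | A (x, a)].
have phiP x : A (x, phi x) by exact: (xgetPex 0 (total x)).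
exists phi; split.
- move=> r x y; apply: fnA (phiP _) _; exact: clA.
- by move=> x; exact: good_abs (phiP x).
- by apply: fnA (phiP y0) y0A.
Qed.
End HB.

Set Implicit Arguments. Unset Strict Implicit.
Section Norming.
Variables (R : realType) (Y X : normedModType R).

Lemma opnorm_ext (U V : normedModType R) (f g : U -> V) : (forall x, f x = g x) -> opnorm f = opnorm g.
Proof. by move=> h; rewrite (funext h). Qed.

Lemma opnorm_scale (U V : normedModType R) (f : U -> V) a : bounded_op f ->
  opnorm (fun x => a *: f x) = `|a| * opnorm f.
Proof.
move=> bf; apply/eqP; rewrite eq_le; apply/andP; split.
  apply: opnorm_le; first by rewrite mulr_ge0 // opnorm_ge0.
  by move=> x; rewrite normrZ -mulrA ler_wpM2l // opnorm_bound.
have bg : bounded_op (fun x => a *: f x).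
  have [lf [M hM]] := bf; split.
    by move=> r x y; rewrite lf scalerDr !scalerA mulrC.
  by exists (`|a| * M) => x; rewrite normrZ -mulrA ler_wpM2l.
have [a00|a0] := eqVneq a 0; first by subst a; rewrite normr0 mul0r; exact: opnorm_ge0 bg.
rewrite -ler_pdivlMl ?normr_gt0 //; apply: opnorm_le.
  by rewrite mulr_ge0 ?invr_ge0 // opnorm_ge0.
move=> x; have -> : f x = a^-1 *: (a *: f x) by rewrite scalerA mulVf // scale1r.
by rewrite normrZ normfV -mulrA ler_wpM2l ?invr_ge0 //; exact: opnorm_bound bg.
Qed.

Lemma mx_coord_le k (c : 'rV[R]_k) i : `|c 0 i| <= `|c|.
Proof.
have /mapP[j Hj ->] : `|c 0 i| \in [seq `|c x.1 x.2| | x : 'I_1 * 'I_k].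
  by apply/mapP; exists (0, i) => //=; rewrite mem_enum.
have -> : `|c| = mx_norm c by []. 
by rewrite mx_normrE; apply/bigmax_geP; right => /=; exists j.
Qed.

Lemma lip_continuous k (g : 'rV[R]_k -> R) K : 0 <= K ->
  (forall c d, `|g c - g d| <= K * `|c - d|) -> continuous g.
Proof.
move=> K0 h x; apply/(@cvgrPdist_lt _ _ _ (nbhs x) _) => e e0. apply/(@nbhs_normP R _ x).
exists (e / (K + 1)); first by rewrite /= divr_gt0 // ltr_wpDl.
move=> y /= hy; apply: le_lt_trans (h x y) _.
have K1 : 0 < K + 1 by rewrite ltr_wpDl.
apply: (@le_lt_trans _ _ ((K + 1) * `|x - y|)).
  by rewrite ler_wpM2r // lerDl.
by rewrite mulrC -ltr_pdivlMr.
Qed.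

Section LL.
Variables (k : nat) (L : 'rV[R]_k -> Y -> X).
Hypothesis Llin : forall a c d x, L (a *: c + d) x = a *: L c x + L d x.
Hypothesis Lbd : forall c, bounded_op (L c).

Lemma L0 x : L 0 x = 0.
Proof.
have h := Llin 1 0 0 x; rewrite !scale1r addr0 in h.
by have := congr1 (fun v => v - L 0 x) h; rewrite subrr addrK.
Qed.
Lemma LZ a c x : L (a *: c) x = a *: L c x.
Proof. by have := Llin a c 0 x; rewrite !addr0 L0 addr0. Qed.
Lemma LB c d x : L (c - d) x = L c x - L d x.
Proof. by have := Llin (-1) d c x; rewrite !scaleN1r addrC => ->; rewrite addrC. Qed.

Lemma Lsum c x : L c x = \sum_(i < k) c 0 i *: L 'e_i x.
Proof.
rewrite {1}(row_sum_delta c); elim/big_rec2: _ => [|i y1 y2 _ IH]; first exact: L0.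
by rewrite Llin IH.
Qed.

Definition KL := \sum_(i < k) opnorm (L 'e_i).

Lemma KL_ge0 : 0 <= KL.
Proof. by apply: sumr_ge0 => i _; apply: opnorm_ge0. Qed.

Lemma opnormL_le c : opnorm (L c) <= `|c| * KL.
Proof.
apply: opnorm_le; first by rewrite mulr_ge0 // KL_ge0.
move=> x; rewrite Lsum; apply: le_trans (ler_norm_sum _ _ _) _.
rewrite /KL mulr_sumr mulr_suml; apply: ler_sum => i _.
rewrite normrZ -mulrA; apply: ler_pM => //; first exact: mx_coord_le.
exact: opnorm_bound.
Qed.

Lemma opnormL_lip c d : `|opnorm (L c) - opnorm (L d)| <= `|c - d| * KL.
Proof.
have step c' d' : opnorm (L c') - opnorm (L d') <= `|c' - d'| * KL.
  rewrite lerBlDr; apply: le_trans (_ : opnorm (L (c' - d')) + opnorm (L d') <= _); last first.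
    by rewrite lerD2r opnormL_le.
  apply: opnorm_le; first by rewrite addr_ge0 // opnorm_ge0.
  move=> x; have -> : L c' x = L (c' - d') x + L d' x by rewrite LB subrK.
  by rewrite mulrDl; apply: le_trans (ler_normD _ _) _; apply: lerD; apply: opnorm_bound.
rewrite ler_norml step andbT lerNl opprB; apply: le_trans (step d c) _.
by rewrite -normrN opprB.
Qed.
End LL.
End Norming.

Set Implicit Arguments. Unset Strict Implicit.
Section N2.
Variables (R : realType) (Y X : normedModType R).

Lemma opnorm0f (U V : normedModType R) (f : U -> V) : (forall x, f x = 0) -> opnorm f = 0.
Proof.
move=> h; apply/eqP; rewrite eq_le; apply/andP; split.
  by apply: opnorm_le => // x; rewrite h normr0 mul0r.
apply: opnorm_ge0; split; first by move=> a x y; rewrite !h scaler0 addr0.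
by exists 0 => x; rewrite h normr0 mul0r.
Qed.

Lemma norming_inj k (L : 'rV[R]_k -> Y -> X)
  (Llin : forall a c d x, L (a *: c + d) x = a *: L c x + L d x)
  (Lbd : forall c, bounded_op (L c))
  (inj : forall c, (forall x, L c x = 0) -> c = 0) (d : R) (d0 : 0 < d) (d1 : d < 1) :
  exists ys : seq Y, (forall y, y \in ys -> `|y| = 1) /\
    (forall c, 0 < opnorm (L c) -> exists2 y, y \in ys & (1 - d) * opnorm (L c) <= `|L c y|).
Proof.
pose A := [set c : 'rV[R]_k | `|c| = 1].
have cA : compact A.
  apply: bounded_closed_compact.
    exists 1; split; first exact: num_real.
    by move=> M M1 c Ac; rewrite /= Ac; exact: ltW.
  apply: (@preimage_closed _ _ (fun c : 'rV[R]_k => `|c|) [set 1]) => //.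
  by move=> x _; exact: norm_continuous.
pose g y c := `|L c y| - (1 - d) * opnorm (L c).
have gcont y : continuous (g y).
  apply: (@lip_continuous _ _ _ ((`|y| + `|1 - d|) * KL L)).
    by rewrite mulr_ge0 ?addr_ge0 // KL_ge0.
  move=> c c'.
  have -> : g y c - g y c' = (`|L c y| - `|L c' y|) + (-(1-d)) * (opnorm (L c) - opnorm (L c')).
    by rewrite /g; ring.
  have -> : (`|y| + `|1 - d|) * KL L * `|c - c'| =
      `|y| * (`|c - c'| * KL L) + `|1 - d| * (`|c - c'| * KL L) by ring.
  apply: le_trans (ler_normD _ _) _; apply: lerD.
    apply: le_trans (ler_dist_dist _ _) _.
    rewrite -LB //; apply: le_trans (opnorm_bound _ (Lbd _)) _.
    by rewrite mulrC ler_wpM2l // opnormL_le.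
  by rewrite normrM normrN ler_wpM2l // opnormL_lip.
have Lc0 c : 0 < opnorm (L c) -> c != 0.
  apply: contraTneq => ->.
  have -> : opnorm (L 0) = 0 by apply: opnorm0f; exact: (L0 Llin).
  by rewrite ltxx.
have cov : A `<=` cover [set y : Y | `|y| = 1] (fun y => g y @^-1` [set r | 0 < r]).
  move=> c Ac.
  have opos : 0 < opnorm (L c).
    have c0 : c != 0 by apply/eqP => c0; move: Ac; rewrite /A /= c0 normr0 => /eqP; rewrite eq_sym oner_eq0.
    have [x hx] : exists x, L c x != 0.
      apply: contrapT => hn; move/eqP: c0; apply; apply: inj => x.
      by apply/eqP; apply: contrapT => hx; apply: hn; exists x; apply/negP.
    have x0 : x != 0 by apply: contraNneq hx => ->; rewrite (lin0 (Lbd c).1).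
    have := opnorm_ge (f := L c) (x := `|x|^-1 *: x) (Lbd c).
    rewrite normrZ normfV normr_id mulVf ?normr_eq0 // lexx => /(_ isT).
    apply: lt_le_trans; rewrite (linZ (Lbd c).1) normrZ normfV normr_id.
    by rewrite mulr_gt0 // ?invr_gt0 normr_gt0.
  have [x hx hlt] := opnorm_adh (Lbd c) (mulr_gt0 d0 opos).
  have hlt' : (1 - d) * opnorm (L c) < `|L c x| by move: hlt; rewrite mulrBl mul1r.
  have Lx0 : 0 < `|L c x|.
    by apply: le_lt_trans hlt'; rewrite mulr_ge0 // ?subr_ge0 ?ltW // opnorm_ge0.
  have x0 : x != 0 by apply: contraTneq Lx0 => ->; rewrite (lin0 (Lbd c).1) normr0 ltxx.
  exists (`|x|^-1 *: x).
    by rewrite /= normrZ normfV normr_id mulVf // normr_eq0.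
  rewrite /= /g subr_gt0 (linZ (Lbd c).1) normrZ normfV normr_id.
  apply: lt_le_trans hlt' _; rewrite ler_peMl //.
  by rewrite invf_ge1 ?normr_gt0.
rewrite compact_cover in cA.
have [D' sD' hD'] := cA Y _ _ (fun y _ => open_comp (fun c _ => gcont y c) (@open_gt _ 0)) cov.
exists D'; split.
  by move=> y /sD'; rewrite in_setE.
move=> c hc; have c0 := Lc0 c hc.
have nc : 0 < `|c| by rewrite normr_gt0.
have Ac' : A (`|c|^-1 *: c).
  by rewrite /A /= normrZ normfV normr_id mulVf // gt_eqF.
have [y yD hy] := hD' _ Ac'.
exists y => //.
move: hy; rewrite /= /g subr_gt0 (opnorm_ext (LZ Llin _ c)) (opnorm_scale _ (Lbd c)).
rewrite (LZ Llin) normrZ normfV normr_id mulrCA ltr_pM2l ?invr_gt0 //.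
exact: ltW.
Qed.

Lemma norming k (L : 'rV[R]_k -> Y -> X)
  (Llin : forall a c d x, L (a *: c + d) x = a *: L c x + L d x)
  (Lbd : forall c, bounded_op (L c)) (d : R) (d0 : 0 < d) (d1 : d < 1) :
  exists ys : seq Y, (forall y, y \in ys -> `|y| = 1) /\
    (forall c, 0 < opnorm (L c) -> exists2 y, y \in ys & (1 - d) * opnorm (L c) <= `|L c y|).
Proof.
elim: k L Llin Lbd => [|k IH] L Llin Lbd.
  apply: norming_inj => // c _; exact: thinmx0.
have [inj|ninj] := pselect (forall c, (forall x, L c x = 0) -> c = 0).
  exact: norming_inj.
have [c0 [hc0 c00]] : exists c0, (forall x, L c0 x = 0) /\ c0 != 0.
  apply: contrapT => hn; apply: ninj => c hc; apply: contrapT => /eqP cn.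
  by apply: hn; exists c.
have [j cj] : exists j, c0 0 j != 0.
  apply: contrapT => hn; move/eqP: c00; apply; apply/rowP => i.
  rewrite mxE; apply: contrapT => hi; apply: hn; exists i.
  by apply/eqP.
pose ins (e : 'rV[R]_k) : 'rV[R]_k.+1 :=
  \row_i (if unlift j i is Some i' then e 0 i' else 0).
have insl a e e' : ins (a *: e + e') = a *: ins e + ins e'.
  by apply/rowP => i; rewrite !mxE; case: unlift => [i'|]; rewrite ?mxE // mulr0 addr0.
pose L' e := L (ins e).
have [ys [ys1 hys]] := IH L' (fun a e e' x => (ltac:(by rewrite /L' insl Llin))) (fun e => Lbd _).
exists ys; split => // c hc.
pose c' := c - (c 0 j / c0 0 j) *: c0.
have Lc x : L c x = L c' x.
  rewrite /c' -[c - _]addrC -scaleNr Llin hc0 scaler0 add0r //.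
have c'j : c' 0 j = 0 by rewrite /c' !mxE divfK // subrr.
pose e : 'rV[R]_k := \row_(i' < k) c' 0 (lift j i').
have c'e : c' = ins e.
  apply/rowP => i; rewrite [in RHS]mxE; case: unliftP => [i' ->|->].
    by rewrite /e; apply: esym; exact: (mxE _ _ _).
  exact: c'j.
have h := hys e; rewrite /L' -c'e -(opnorm_ext Lc) in h.
have [y yin hy] := h hc; exists y => //; by rewrite Lc.
Qed.
End N2.

Set Implicit Arguments. Unset Strict Implicit.
Section H5.
Variable R : realType.

Lemma mx_norm_le k (v : 'rV[R]_k) M : 0 <= M -> (forall i, `|v 0 i| <= M) -> `|v| <= M.
Proof.
move=> M0 h; have -> : `|v| = mx_norm v by [].
rewrite mx_normrE; apply/bigmax_leP; split => // [[i j]] _ /=.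
by rewrite (ord1 i).
Qed.

Lemma lin_rV_sum (V : normedModType R) k (f : 'rV[R]_k -> V) (v : 'rV[R]_k) : is_linear f ->
  f v = \sum_(i < k) v 0 i *: f 'e_i.
Proof.
move=> lf; rewrite {1}(row_sum_delta v); elim/big_rec2: _ => [|i y1 y2 _ IH]; first exact: lin0.
by rewrite lf IH.
Qed.

Lemma lin_rV_bounded (V : normedModType R) k (f : 'rV[R]_k -> V) : is_linear f -> bounded_op f.
Proof.
move=> lf; split => //; exists (\sum_(i < k) `|f 'e_i|) => v.
have -> : f v = \sum_(i < k) v 0 i *: f 'e_i.
  rewrite {1}(row_sum_delta v); elim/big_rec2: _ => [|i y1 y2 _ IH]; first exact: lin0.
  by rewrite lf IH.
apply: le_trans (ler_norm_sum _ _ _) _.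
rewrite mulr_suml; apply: ler_sum => i _; rewrite normrZ mulrC ler_wpM2l //.
exact: mx_coord_le.
Qed.

Section Span.
Variable (V : normedModType R) (zs : seq V).
Lemma in_span0 : in_span zs 0.
Proof. by exists (fun=> 0); rewrite big1 // => i _; rewrite scale0r. Qed.
Lemma in_spanD a z z' : in_span zs z -> in_span zs z' -> in_span zs (a *: z + z').
Proof.
move=> [c ->] [c' ->]; exists (fun i => a * c i + c' i).
by rewrite scaler_sumr -big_split; apply: eq_bigr => i _; rewrite scalerDl scalerA.
Qed.
Lemma in_span_mem z : z \in zs -> in_span zs z.
Proof.
move=> zin; have zi : (index z zs < size zs)%N by rewrite index_mem.
pose i0 : 'I_(size zs) := Ordinal zi.
exists (fun i => if i == i0 then 1 else 0).
rewrite (bigD1 i0) //= big1 => [|i /negbTE ->]; last by rewrite scale0r.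
by rewrite eqxx scale1r addr0 nth_index.
Qed.
Lemma in_span_sum n (F : 'I_n -> V) : (forall i, in_span zs (F i)) -> in_span zs (\sum_(i < n) F i).
Proof.
move=> h; elim/big_rec: _ => [|i y _ IH]; first exact: in_span0.
by have := in_spanD 1 (h i) IH; rewrite scale1r.
Qed.
End Span.

Section HH.
Variables (Y X : normedModType R) (H : set (Y -> X)).
Hypothesis hH : closed_op_subspace H.

Lemma H_sum n (F : 'I_n -> Y -> X) : (forall i, H (F i)) -> H (fun x => \sum_(i < n) F i x).
Proof.
case: hH => hbd h0 hadd hsc _.
elim: n F => [|n IH] F hF.
  have -> : (fun x => \sum_(i < 0) F i x) = (fun _ => 0) by apply: funext => x; rewrite big_ord0.
  exact: h0.
have -> : (fun x => \sum_(i < n.+1) F i x) =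
    (fun x => (fun y => \sum_(i < n) F (widen_ord (leqnSn n) i) y) x + F ord_max x).
  by apply: funext => x; rewrite big_ord_recr.
by apply: hadd; [apply: IH => i; exact: hF|exact: hF].
Qed.

Lemma H_span s T : (forall f, f \in s -> H f) -> in_op_span s T -> H T.
Proof.
move=> hs [c ->]; apply: H_sum => i; case: hH => _ _ _ hsc _.
by apply: hsc; apply: hs; apply: mem_nth; exact: ltn_ord.
Qed.
End HH.
End H5.

Unset Implicit Arguments. Set Strict Implicit.

Theorem theorem3p6 (R : realType) (X : completeNormedModType R)
  (hX : forall (eps : R), 0 < eps -> forall (zs : seq X) (n : nat),
     exists T : 'rV[R]_n -> X,
       [/\ is_linear T, opnorm T <= 1 &
         forall (y : 'rV[R]_n) (z : X), in_span zs z ->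
           `|z + T y| >= (1 - eps) * (`|z| + `|y|)]) :
  forall (Y : completeNormedModType R), (exists y : Y, y != 0) ->
  forall H : set (Y -> X), closed_op_subspace H ->
    (forall f : Y -> X, finite_rank_op f -> H f) ->
    octahedral_op_subspace H.
Proof.
move=> Y [y1 y10] H hH hF s hs eps eps0.
have [hbd h0 hadd hsc hcl] := hH.
pose u0 := `|y1|^-1 *: y1.
have u01 : `|u0| = 1 by rewrite normrZ normfV normr_id mulVf // normr_eq0.
pose k := size s.
pose L (c : 'rV[R]_k) (x : Y) : X := \sum_(i < k) c 0 i *: (s`_i) x.
have Llin a c d x : L (a *: c + d) x = a *: L c x + L d x.
  rewrite /L scaler_sumr -big_split; apply: eq_bigr => i _.
  by rewrite !mxE scalerDl scalerA.
have LH c : H (L c).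
  by apply: (H_span hH hs); exists (fun i => c 0 i).
have Lbd c : bounded_op (L c) by exact: hbd.
pose d := Num.min (eps / 2) (1 / 2).
have d0 : 0 < d by rewrite lt_min !divr_gt0.
have d1 : d < 1 by rewrite gt_min; apply/orP; right; lra.
have de : d <= eps / 2 by rewrite ge_min lexx.
have [ys [ys1 hys]] := norming Llin Lbd d0 d1.
pose ys' := u0 :: ys.
pose m := size ys'.
pose phiOf (y : Y) := proj1_sig (cid (hahn_banach y)).
have phiP y : [/\ (forall a x z, phiOf y (a *: x + z) = a * phiOf y x + phiOf y z),
    (forall x, `|phiOf y x| <= `|x|) & phiOf y y = `|y|].
  exact: (proj2_sig (cid (hahn_banach y))).
pose Psi (x : Y) : 'rV[R]_m := \row_(i < m) phiOf (ys'`_i) x.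
have Psilin : is_linear Psi.
  move=> a x z; apply/rowP => i; rewrite !mxE.
  by case: (phiP ys'`_i) => -> _ _.
have Psile x : `|Psi x| <= `|x|.
  apply: mx_norm_le => // i; rewrite mxE.
  by case: (phiP ys'`_i) => _ -> _.
have Psige (i : 'I_m) : `|ys'`_i| = 1 -> 1 <= `|Psi (ys'`_i)|.
  move=> h; apply: le_trans (mx_coord_le _ i); rewrite mxE.
  by case: (phiP ys'`_i) => _ _ ->; rewrite h normr1.
pose zs : seq X := [seq f y | f <- s, y <- ys'].
have [Phi [Philin Phin Phib]] := hX d d0 zs m.
have Phibd : bounded_op Phi := lin_rV_bounded Philin.
have Phi1 v : `|Phi v| <= `|v|.
  apply: le_trans (opnorm_bound _ Phibd) _.
  by rewrite -[leRHS]mul1r ler_wpM2r.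
pose S0 x := Phi (Psi x).
have S0lin : is_linear S0 by move=> a x z; rewrite /S0 Psilin Philin.
have S0bd : bounded_op S0.
  by split => //; exists 1 => x; rewrite mul1r; apply: le_trans (Phi1 _) (Psile _).
have S0le : opnorm S0 <= 1.
  by apply: opnorm_le => // x; rewrite mul1r; apply: le_trans (Phi1 _) (Psile _).
have Psiu0 : 1 <= `|Psi u0| by exact: (Psige (Ordinal (isT : (0 < m)%N)) u01).
have S0ge : 1 - d <= opnorm S0.
  have := Phib (Psi u0) 0 (in_span0 zs); rewrite add0r normr0 add0r => h.
  apply: le_trans (opnorm_ge (f := S0) (x := u0) S0bd _); last by rewrite u01.
  apply: le_trans h; rewrite -[leLHS]mulr1 ler_wpM2l //; lra.
have S0pos : 0 < opnorm S0 by apply: lt_le_trans S0ge; lra.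
pose a := (opnorm S0)^-1.
pose S x := a *: S0 x.
have a1 : 1 <= a by rewrite /a invf_ge1.
have a0 : 0 < a by lra.
have Sbd : bounded_op S.
  split; first by move=> b x z; rewrite /S S0lin scalerDr !scalerA mulrC.
  exists a => x; rewrite /S normrZ gtr0_norm //; apply: ler_wpM2l; first exact: ltW.
  exact: le_trans (Phi1 _) (Psile _).
have Snorm : opnorm S = 1.
  by rewrite (opnorm_scale _ S0bd) /a normfV gtr0_norm // mulVf // gt_eqF.
have HS : H S.
  apply: hF; split => //; exists [seq Phi 'e_i | i <- enum 'I_m] => x.
  rewrite /S /S0 (lin_rV_sum (Psi x) Philin).
  have := in_spanD a (in_span_sum (n := m) (zs := [seq Phi 'e_i | i <- enum 'I_m])
     (F := fun i => Psi x 0 i *: Phi 'e_i) _) (in_span0 _); rewrite addr0; apply.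
  move=> i; have := in_spanD (Psi x 0 i) (in_span_mem (map_f (fun i => Phi 'e_i) (mem_enum _ i))) (in_span0 _).
  by rewrite addr0.
exists S; split => //.
move=> T hT lam.
have HT : H T := H_span hH hs hT.
have [c hc] := hT.
pose cv : 'rV[R]_k := \row_i c i.
have TL x : T x = L cv x by rewrite hc /L; apply: eq_bigr => i _; rewrite mxE.
have TN0 : 0 <= opnorm T by exact: opnorm_ge0 (hbd _ HT).
have [y [yin y1' hy]] : exists y, [/\ y \in ys', `|y| = 1 & (1 - d) * opnorm T <= `|T y|].
  have [Tpos|Tnp] := ltP 0 (opnorm T).
    have := hys cv; rewrite -(opnorm_ext TL) => /(_ Tpos) [y yin hy]; exists y; split.
    - by rewrite inE yin orbT.
    - exact: ys1.
    - by rewrite TL.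
  exists u0; split; [by rewrite inE eqxx|done|].
  apply: le_trans (normr_ge0 _); apply: mulr_ge0_le0 => //; lra.
have i_lt : (index y ys' < m)%N by rewrite index_mem.
have Psiy : 1 <= `|Psi y|.
  by have := Psige (Ordinal i_lt); rewrite /= nth_index // => /(_ y1').
have TyZ : in_span zs (T y).
  rewrite hc; apply: in_span_sum => j.
  have := in_spanD (c j) (in_span_mem (allpairs_f (fun f y => f y) (mem_nth 0 (ltn_ord j)) yin)) (in_span0 _).
  by rewrite addr0.
have key := Phib ((lam * a) *: Psi y) (T y) TyZ.
have eq : T y + lam *: S y = T y + Phi ((lam * a) *: Psi y).
  by rewrite /S /S0 (linZ Philin) scalerA.
have bTS : bounded_op (fun x => T x + lam *: S x) by apply: hbd; apply: hadd => //; exact: hsc.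
have le1 : `|T y + lam *: S y| <= opnorm (fun x => T x + lam *: S x).
  by apply: (opnorm_ge (f := fun x => T x + lam *: S x) bTS); rewrite y1'.
have lb : `|lam| <= `|(lam * a) *: Psi y|.
  rewrite normrZ normrM (gtr0_norm a0) -mulrA -[leLHS]mulr1 ler_wpM2l //.
  by rewrite -[1]mulr1 ler_pM.
rewrite -eq in key.
set N := opnorm T in hy TN0 *; set P := opnorm _ in le1 *.
set A := `|T y| in hy key *; set B := `|(lam * a) *: Psi y| in key lb *.
set l := `|lam| in lb *; set Q := `|T y + lam *: S y| in key le1 *.
have l0 : 0 <= l by exact: normr_ge0.
nra.
Qed.
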